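(* Let $K$ be a field, $Q$ the bipartite type $A$ quiver with vertices $y_0,x_1,\dots,x_n,y_n$ and arrows $\alpha_i\colon x_i\to y_{i-1}$, $\beta_i\colon x_i\to y_i$, and $\mathbf{d}$ a dimension vector. A matrix $Z\in Y^{\mathbf{w}}_\circ$ lies in the image of $\zeta$ if and only if both (NW) $\operatorname{rank}Z_{y_i\times x_j}=0$ for all $0\le i\le n-2$ and $i+2\le j\le n$, and (SE) $\operatorname{rank}Z_{x_i\times y_j}=\sum_{k=i}^n\mathbf{d}(x_k)+\sum_{k=0}^j\mathbf{d}(y_k)$ for all $2\le i\le n$ and $i-1\le j\le n-1$.
   Context: $d_x=\sum\mathbf{d}(x_i)$, $d_y=\sum\mathbf{d}(y_i)$, $d=d_x+d_y$. $Y^{\mathbf{w}}_\circ$ is the set of $d\times d$ matrices $\begin{pmatrix}*&\mathbf{1}_{d_y}\\ \mathbf{1}_{d_x}&0\end{pmatrix}$ with $*$ an arbitrary $d_y\times d_x$ block. Block rows of such a matrix are labeled, top to bottom, $y_0,\dots,y_n,x_n,\dots,x_1$ (of sizes $\mathbf{d}$ of the label) and block columns, left to right, $x_n,\dots,x_1,y_0,\dots,y_n$. For vertices $v,v'$, $Z_{v\times v'}$ is the northwest-justified submatrix of $Z$ whose southeast corner is the block in block row $v$ and block column $v'$. For $V\in\mathrm{rep}_Q(\mathbf{d})$ (tuples $V_a\in\mathrm{Mat}_{\mathbf{d}(ha)\times\mathbf{d}(ta)}(K)$), $M_Q(V)$ is the block matrix with block rows $y_0,\dots,y_n$ and block columns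 $x_n,\dots,x_1$, $V_{\alpha_i}$ in block $(y_{i-1},x_i)$, $V_{\beta_i}$ in block $(y_i,x_i)$, zeros elsewhere, and $\zeta(V)=\begin{pmatrix}M_Q(V)&\mathbf{1}_{d_y}\\ \mathbf{1}_{d_x}&0\end{pmatrix}$. *)

(* Defs.v *)
From HB Require Import structures.
From mathcomp Require Import all_boot all_order all_algebra.
Set Implicit Arguments. Unset Strict Implicit. Unset Printing Implicit Defensive.
Import GRing.Theory.
Local Open Scope ring_scope.

(* Dimension vector d of the quiver with vertices y_0,x_1,y_1,...,x_n,y_n is
   encoded by dy : nat -> nat (dy j = d(y_j), 0 <= j <= n) and
   dx : nat -> nat (dx i = d(x_i), 1 <= i <= n); other values are unused. *)

Definition dY (dy : nat -> nat) (n : nat) : nat := (\sum_(k < n.+1) dy k)%N.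
Definition dX (dx : nat -> nat) (n : nat) : nat := (\sum_(1 <= k < n.+1) dx k)%N.

Definition yoff (dy : nat -> nat) (i : nat) : nat := (\sum_(k < i) dy k)%N.
(* Offset of block column x_i (columns ordered x_n,...,x_1): blocks x_n..x_{i+1}. *)
Definition xoff (dx : nat -> nat) (n i : nat) : nat := (\sum_(i.+1 <= k < n.+1) dx k)%N.

Definition embed_block (K : fieldType) (m m' p q : nat) (ro co : nat)
  (A : 'M[K]_(p, q)) : 'M[K]_(m, m') :=
  \matrix_(r < m, c < m')
    \sum_(a < p) \sum_(b < q)
      (((r : nat) == ro + a)%N && ((c : nat) == co + b)%N)%:R * A a b.

(* A representation V in rep_Q(d): V_{alpha_i} : d(y_{i-1}) x d(x_i),
   V_{beta_i} : d(y_i) x d(x_i), for 1 <= i <= n (other indices unused). *)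
Record rep (K : fieldType) (dy dx : nat -> nat) := Rep {
  Valpha : forall i : nat, 'M[K]_(dy i.-1, dx i);
  Vbeta  : forall i : nat, 'M[K]_(dy i, dx i) }.

(* M_Q(V): block rows y_0..y_n, block columns x_n..x_1, V_{alpha_i} in block
   (y_{i-1}, x_i), V_{beta_i} in block (y_i, x_i), zero elsewhere. *)
Definition MQ (K : fieldType) (n : nat) (dy dx : nat -> nat) (V : rep K dy dx)
  : 'M[K]_(dY dy n, dX dx n) :=
  \sum_(1 <= i < n.+1)
     (embed_block _ _ (yoff dy i.-1) (xoff dx n i) (Valpha V i)
    + embed_block _ _ (yoff dy i) (xoff dx n i) (Vbeta V i)).

Definition zeta (K : fieldType) (n : nat) (dy dx : nat -> nat) (V : rep K dy dx)
  : 'M[K]_(dY dy n + dX dx n, dX dx n + dY dy n) :=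
  block_mx (MQ n V) 1%:M 1%:M 0.

Definition in_Ycirc (K : fieldType) (n : nat) (dy dx : nat -> nat)
  (Z : 'M[K]_(dY dy n + dX dx n, dX dx n + dY dy n)) : Prop :=
  exists S : 'M[K]_(dY dy n, dX dx n), Z = block_mx S 1%:M 1%:M 0.

(* Rank of the northwest-justified r x c submatrix of Z (r, c truncated to
   the size of Z, which never happens in the uses below). *)
Definition nw_rank (K : fieldType) (m m' : nat) (Z : 'M[K]_(m, m')) (r c : nat) : nat :=
  \rank (\matrix_(i < minn r m, j < minn c m')
           Z (widen_ord (geq_minr r m) i) (widen_ord (geq_minr c m') j)).

(* rank Z_{y_i x x_j}: rows through block row y_i, columns through block column x_j *)
Definition rank_yx (K : fieldType) (n : nat) (dy dx : nat -> nat)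
  (Z : 'M[K]_(dY dy n + dX dx n, dX dx n + dY dy n)) (i j : nat) : nat :=
  nw_rank Z (\sum_(k < i.+1) dy k)%N (\sum_(j <= k < n.+1) dx k)%N.

(* rank Z_{x_i x y_j}: rows through block row x_i (rows y_0..y_n, x_n..x_i),
   columns through block column y_j (columns x_n..x_1, y_0..y_j) *)
Definition rank_xy (K : fieldType) (n : nat) (dy dx : nat -> nat)
  (Z : 'M[K]_(dY dy n + dX dx n, dX dx n + dY dy n)) (i j : nat) : nat :=
  nw_rank Z (dY dy n + \sum_(i <= k < n.+1) dx k)%N
            (dX dx n + \sum_(k < j.+1) dy k)%N.

(* Main.v *)
Require Import Defs.
From HB Require Import structures.
From mathcomp Require Import all_boot all_order all_algebra zify.
Set Implicit Arguments. Unset Strict Implicit. Unset Printing Implicit Defensive.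
Import GRing.Theory.
Local Open Scope ring_scope.

Import GRing.Theory.
Lemma rank_blk (K : fieldType) m m' R C (hR : (R <= m)%N) (hC : (C <= m')%N)
  (S : 'M[K]_(m,m')) :
  \rank (block_mx S (pid_mx R) (pid_mx C) 0 : 'M_(m + C, m' + R)) =
  (\rank (copid_mx R *m S *m copid_mx C) + (C + R))%N.
Proof.
set S2 := copid_mx R *m S *m copid_mx C.
pose Q := block_mx 1%:M 0 (- ((pid_mx R : 'M_(R, m)) *m S)) 1%:M : 'M[K]_(m' + R).
pose S1 := copid_mx R *m S.
pose P := block_mx 1%:M (- (S1 *m (pid_mx C : 'M_(m', C)))) 0 1%:M : 'M[K]_(m + C).
have PU : P \in unitmx by rewrite unitmxE det_ublock !det1 mulr1 unitr1.
have QU : Q \in unitmx by rewrite unitmxE det_lblock !det1 mulr1 unitr1.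
set D0 := block_mx _ _ _ _.
pose E : 'M[K]_(m + C, m' + R) := block_mx S2 (pid_mx R) (pid_mx C) 0.
have eE : P *m (D0 *m Q) = E.
  rewrite /P /Q /D0 !mulmx_block !mulmx1 !mul1mx !mulmx0 !mul0mx !addr0 !add0r.
  rewrite mulmx0 addr0 mulmxN mulmxA pid_mx_id // mulNmx -mulmxA pid_mx_id //.
  by rewrite /E /S2 /S1 /copid_mx mulmxBr mulmxBl mulmx1; congr block_mx; rewrite ?mul1mx.
have -> : \rank D0 = \rank E.
  by rewrite -eE (eqmxMfull _ (_ : row_full P)) ?mxrankMfree ?row_free_unit ?row_full_unit.
pose F1 : 'M[K]_(m + C, m' + R) := block_mx S2 0 0 0.
pose F2 : 'M[K]_(m + C, m' + R) := block_mx 0 (pid_mx R) (pid_mx C) 0.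
have EF : E = F1 + F2 by rewrite /F1 /F2 add_block_mx !addr0 !add0r.
pose X : 'M[K]_(m + C) := block_mx (copid_mx R) 0 0 0.
have XE : X *m E = F1.
  rewrite /X /E /F1 mulmx_block !mulmx0 !mul0mx !addr0 mul_copid_mx_pid //.
  by rewrite /S2 !mulmxA copid_mx_id.
have eqE : (E == F1 + F2)%MS.
  apply/andP; split; first by rewrite {1}EF addmx_sub_adds.
  rewrite addsmx_sub -XE submxMl /=.
  have -> : F2 = (1%:M - X) *m E by rewrite mulmxBl mul1mx XE EF addrAC subrr add0r.
  exact: submxMl.
rewrite (eqmxP eqE) mxrank_disjoint_sum.
  rewrite /F1 rank_diag_block_mx mxrank0 addn0 /F2 block_mxEv -addsmxE addsmxC addsmxE.
  by rewrite -block_mxEv rank_diag_block_mx !rank_pid_mx.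
pose Pc : 'M[K]_(m' + R) := block_mx (copid_mx C) 0 0 0.
have F1P : F1 *m Pc = F1.
  by rewrite /F1 /Pc mulmx_block !mulmx0 !mul0mx !addr0 /S2 -!mulmxA copid_mx_id.
have F2P : F2 *m Pc = 0.
  by rewrite /F2 /Pc mulmx_block !mulmx0 !mul0mx !addr0 mul_pid_mx_copid // block_mx0.
have /submxP [D1 e1] := capmxSl F1 F2.
have /submxP [D2 e2] := capmxSr F1 F2.
transitivity ((F1 :&: F2)%MS *m Pc); first by rewrite {2}e1 -mulmxA F1P -e1.
by rewrite e2 -mulmxA F2P mulmx0.
Qed.
Lemma pidM_E (K : fieldType) m m' R (A : 'M[K]_(m, m')) i j :
  ((pid_mx R : 'M_m) *m A) i j = if (i < R)%N then A i j else 0.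
Proof.
rewrite !mxE (bigD1 i) //= big1 ?addr0 => [|k /negPf kn].
  by rewrite !mxE eqxx /=; case: ifP; rewrite ?mul1r ?mul0r.
by rewrite !mxE (_ : (i == k :> nat) = false) ?mul0r // eq_sym; exact: kn.
Qed.

Lemma Mpid_E (K : fieldType) m m' C (A : 'M[K]_(m, m')) i j :
  (A *m (pid_mx C : 'M_m')) i j = if (j < C)%N then A i j else 0.
Proof.
rewrite !mxE (bigD1 j) //= big1 ?addr0 => [|k /negPf kn].
  by rewrite !mxE eqxx /=; case: ifP; rewrite ?mulr1 ?mulr0.
by rewrite !mxE (_ : (k == j :> nat) = false) ?mulr0 //; exact: kn.
Qed.

Lemma copidM_E (K : fieldType) m m' R (A : 'M[K]_(m, m')) i j :
  ((copid_mx R : 'M_m) *m A) i j = if (R <= i)%N then A i j else 0.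
Proof.
rewrite /copid_mx mulmxBl mul1mx 2!mxE pidM_E ltnNge.
by case: (R <= i)%N; rewrite ?subrr ?subr0.
Qed.

Lemma McopidE (K : fieldType) m m' C (A : 'M[K]_(m, m')) i j :
  (A *m (copid_mx C : 'M_m')) i j = if (C <= j)%N then A i j else 0.
Proof.
rewrite /copid_mx mulmxBr mulmx1 2!mxE Mpid_E ltnNge.
by case: (C <= j)%N; rewrite ?subrr ?subr0.
Qed.

Lemma S2E (K : fieldType) m m' R C (S : 'M[K]_(m, m')) i j :
  (copid_mx R *m S *m copid_mx C) i j = if (R <= i)%N && (C <= j)%N then S i j else 0.
Proof.
rewrite McopidE copidM_E.
by case: (R <= i)%N; case: (C <= j)%N.
Qed.
Definition sget (K : fieldType) p q (A : 'M[K]_(p, q)) (i j : nat) : K :=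
  match (insub i : option 'I_p), (insub j : option 'I_q) with
  | Some i', Some j' => A i' j' | _, _ => 0 end.

Lemma sgetE (K : fieldType) p q (A : 'M[K]_(p, q)) (i : 'I_p) (j : 'I_q) :
  sget A i j = A i j.
Proof. by rewrite /sget !valK. Qed.

Lemma sget_in (K : fieldType) p q (A : 'M[K]_(p, q)) i j (hi : (i < p)%N) (hj : (j < q)%N) :
  sget A i j = A (Ordinal hi) (Ordinal hj).
Proof. by rewrite -sgetE. Qed.

Lemma sget_oob (K : fieldType) p q (A : 'M[K]_(p, q)) i j :
  ~~ ((i < p) && (j < q))%N -> sget A i j = 0.
Proof.
rewrite negb_and /sget => /orP [h|h]; first by rewrite insubN.
by case: (insub i) => // ?; rewrite insubN.
Qed.

Lemma sget0 (K : fieldType) p q i j : sget (0 : 'M[K]_(p, q)) i j = 0.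
Proof. by rewrite /sget; case: insub => // ?; case: insub => // ?; rewrite mxE. Qed.

Lemma blockE (K : fieldType) m1 m2 n1 n2 (A : 'M[K]_(m1, n1)) (B : 'M[K]_(m1, n2))
  (C : 'M[K]_(m2, n1)) (D : 'M[K]_(m2, n2)) r c :
  block_mx A B C D r c =
  if (r < m1)%N then (if (c < n1)%N then sget A r c else sget B r (c - n1))
  else (if (c < n1)%N then sget C (r - m1) c else sget D (r - m1) (c - n1)).
Proof.
case: split_ordP => r' ->; case: split_ordP => c' ->;
  rewrite ?block_mxEul ?block_mxEur ?block_mxEdl ?block_mxEdr /=
          ?ltn_ord ?ltnNge ?leq_addr /= ?addKn sgetE //.
Qed.

Lemma nw_rankE (K : fieldType) m m' (Z : 'M[K]_(m, m')) r c (hr : (r <= m)%N) (hc : (c <= m')%N) :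
  nw_rank Z r c = \rank (\matrix_(i < r, j < c) Z (widen_ord hr i) (widen_ord hc j)).
Proof.
rewrite /nw_rank; move: (geq_minr r m) (geq_minr c m').
rewrite (minn_idPl hr) (minn_idPl hc) => h1 h2.
by congr (\rank _); apply/matrixP => i j; rewrite !mxE; congr (Z _ _); apply: val_inj.
Qed.

Lemma rank_blk_full (K : fieldType) m m' R C (hR : (R <= m)%N) (hC : (C <= m')%N)
  (S : 'M[K]_(m,m')) :
  \rank (block_mx S (pid_mx R) (pid_mx C) 0 : 'M_(m + C, m' + R)) = (C + R)%N <->
  (forall (r : 'I_m) (c : 'I_m'), (R <= r)%N -> (C <= c)%N -> S r c = 0).
Proof.
rewrite rank_blk //; split.
  move=> h r c hr hc; have : \rank (copid_mx R *m S *m copid_mx C) = 0%N by lia.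
  move/eqP; rewrite mxrank_eq0 => /eqP/matrixP/(_ r c).
  by rewrite S2E hr hc mxE.
move=> h; have -> : copid_mx R *m S *m copid_mx C = 0.
  apply/matrixP => r c; rewrite S2E mxE.
  by case: ifP => // /andP [hr hc]; rewrite h.
by rewrite mxrank0.
Qed.

Lemma rank_nw0 (K : fieldType) m m' (S : 'M[K]_(m,m')) R C (hR : (R <= m)%N) (hC : (C <= m')%N) :
  nw_rank (block_mx S 1%:M 1%:M 0 : 'M_(m + m', m' + m)) R C = 0%N <->
  (forall (r : 'I_m) (c : 'I_m'), (r < R)%N -> (c < C)%N -> S r c = 0).
Proof.
have hR' : (R <= m + m')%N by lia.
have hC' : (C <= m' + m)%N by lia.
rewrite (nw_rankE _ hR' hC'); split.
  move/eqP; rewrite mxrank_eq0 => /eqP/matrixP M0 r c hr hc.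
  move: (M0 (Ordinal hr) (Ordinal hc)).
  by rewrite mxE blockE /= !ltn_ord sgetE => ->; rewrite mxE.
move=> h; apply/eqP; rewrite mxrank_eq0; apply/eqP/matrixP => i j.
rewrite mxE blockE /=.
have hi : (i < m)%N := leq_trans (ltn_ord i) hR.
have hj : (j < m')%N := leq_trans (ltn_ord j) hC.
rewrite hi hj (sget_in _ hi hj) mxE; apply: h; [exact: (ltn_ord i) | exact: (ltn_ord j)].
Qed.

Lemma sget_pid (K : fieldType) m R i j (hR : (R <= m)%N) :
  (i < m)%N -> (j < R)%N ->
  sget (1%:M : 'M[K]_m) i j = sget (pid_mx R : 'M[K]_(m, R)) i j.
Proof.
move=> hi hj; have hjm : (j < m)%N by lia.
rewrite (sget_in _ hi hjm) (sget_in _ hi hj) !mxE -val_eqE /=.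
by case: eqP => // ->; rewrite hj.
Qed.

Lemma sget_pid' (K : fieldType) m C i j (hC : (C <= m)%N) :
  (i < C)%N -> (j < m)%N ->
  sget (1%:M : 'M[K]_m) i j = sget (pid_mx C : 'M[K]_(C, m)) i j.
Proof.
move=> hi hj; have him : (i < m)%N by lia.
rewrite (sget_in _ him hj) (sget_in _ hi hj) !mxE -val_eqE /=.
by rewrite hi andbT.
Qed.

Lemma rank_se (K : fieldType) m m' (S : 'M[K]_(m,m')) R C (hR : (R <= m)%N) (hC : (C <= m')%N) :
  nw_rank (block_mx S 1%:M 1%:M 0 : 'M_(m + m', m' + m)) (m + C) (m' + R) = (C + R)%N <->
  (forall (r : 'I_m) (c : 'I_m'), (R <= r)%N -> (C <= c)%N -> S r c = 0).
Proof.
have hR' : (m + C <= m + m')%N by lia.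
have hC' : (m' + R <= m' + m)%N by lia.
rewrite (nw_rankE _ hR' hC') -rank_blk_full //.
have -> // : \matrix_(i < m + C, j < m' + R)
    (block_mx S 1%:M 1%:M 0 : 'M_(m + m', m' + m)) (widen_ord hR' i) (widen_ord hC' j)
  = block_mx S (pid_mx R) (pid_mx C) 0.
apply/matrixP => i j; rewrite mxE !blockE /=.
case: ifP => hi; case: ifP => hj; rewrite ?sget0 //.
  by apply: sget_pid => //; have := ltn_ord j; lia.
by apply: sget_pid'; rewrite ?hj //; have := ltn_ord i; lia.
Qed.

Lemma embedE (K : fieldType) m m' p q ro co (A : 'M[K]_(p,q)) (r : 'I_m) (c : 'I_m') :
  embed_block m m' ro co A r c =
  if (ro <= r)%N && (co <= c)%N then sget A (r - ro) (c - co) else 0.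
Proof.
rewrite mxE.
case: (boolP ((ro <= r) && (co <= c) && (r - ro < p) && (c - co < q))%N) => h.
  have hp : (r - ro < p)%N by move: h => /andP [/andP [_ ->] _].
  have hq : (c - co < q)%N by move: h => /andP [_ ->].
  have h1 : (ro <= r)%N by move: h => /andP [/andP [/andP [-> _] _] _].
  have h2 : (co <= c)%N by move: h => /andP [/andP [/andP [_ ->] _] _].
  rewrite h1 h2 (sget_in _ hp hq).
  rewrite (bigD1 (Ordinal hp)) //= [X in _ + X]big1 ?addr0 => [|a ha].
    rewrite (bigD1 (Ordinal hq)) //= [X in _ + X]big1 ?addr0 => [|b hb].
      by rewrite !subnKC // !eqxx mul1r.
    have : (nat_of_ord c == co + b)%N = false.
      apply/negP => /eqP e; move: hb; rewrite -val_eqE /=; lia.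
    by move->; rewrite andbF mul0r.
  apply: big1 => b _.
  have : (nat_of_ord r == ro + a)%N = false.
    apply/negP => /eqP e; move: ha; rewrite -val_eqE /=; lia.
  by move->; rewrite mul0r.
rewrite big1 => [|a _].
  case: ifP => // /andP [h1 h2]; symmetry; apply: sget_oob.
  by move: h; rewrite h1 h2.
apply: big1 => b _.
case e1: (nat_of_ord r == ro + a)%N; case e2: (nat_of_ord c == co + b)%N;
  rewrite /= ?mul0r //.
exfalso; move: h; move/eqP: e1 => e1; move/eqP: e2 => e2.
have := ltn_ord a; have := ltn_ord b; rewrite e1 e2 !leq_addr /= !addKn => -> ->.
by [].
Qed.

Definition yo (dy : nat -> nat) k := (\sum_(l < k) dy l)%N.
Definition xs (dx : nat -> nat) n k := (\sum_(k <= l < n.+1) dx l)%N.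

Lemma yoS dy k : yo dy k.+1 = (yo dy k + dy k)%N.
Proof. by rewrite /yo big_ord_recr. Qed.

Lemma yo_mono dy a b : (a <= b)%N -> (yo dy a <= yo dy b)%N.
Proof.
move=> hab; rewrite -(subnKC hab); elim: (b - a)%N => [|k IH]; first by rewrite addn0.
rewrite addnS yoS; lia.
Qed.

Lemma yo_lt dy a b r : (yo dy a <= r)%N -> (r < yo dy b)%N -> (a < b)%N.
Proof. move=> h1 h2; rewrite ltnNge; apply/negP => hba; have := yo_mono dy hba; lia. Qed.

Lemma xsS dx n k : (k <= n)%N -> xs dx n k = (dx k + xs dx n k.+1)%N.
Proof. by move=> hk; rewrite /xs big_ltn. Qed.

Lemma xs0 dx n k : (n < k)%N -> xs dx n k = 0%N.
Proof. by move=> hk; rewrite /xs big_geq. Qed.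

Lemma xs_anti dx n a b : (a <= b)%N -> (xs dx n b <= xs dx n a)%N.
Proof.
move=> hab; rewrite -(subnKC hab); elim: (b - a)%N => [|k IH]; first by rewrite addn0.
rewrite addnS; case: (leqP (a + k) n) => h; first by rewrite (xsS dx h) in IH; lia.
by rewrite xs0 //; lia.
Qed.

Lemma xs_lt dx n a b c : (xs dx n a <= c)%N -> (c < xs dx n b)%N -> (b < a)%N.
Proof. move=> h1 h2; rewrite ltnNge; apply/negP => hba; have := xs_anti dx n hba; lia. Qed.

Lemma yblock dy N r : (r < yo dy N)%N ->
  exists a, [/\ (a < N)%N, (yo dy a <= r)%N & (r < yo dy a.+1)%N].
Proof.
elim: N => [|N IH]; first by rewrite /yo big_ord0.
rewrite yoS => h; case: (ltnP r (yo dy N)) => h'.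
  by have [a [h1 h2 h3]] := IH h'; exists a; split => //; lia.
by exists N; split => //; rewrite yoS.
Qed.

Lemma xblock dx n c : (c < xs dx n 1)%N ->
  exists b, [/\ (1 <= b)%N, (b <= n)%N, (xs dx n b.+1 <= c)%N & (c < xs dx n b)%N].
Proof.
suff H : forall d k, (k + d = n.+1)%N -> (1 <= k)%N -> (c < xs dx n k)%N ->
  exists b, [/\ (k <= b)%N, (b <= n)%N, (xs dx n b.+1 <= c)%N & (c < xs dx n b)%N].
  move=> hc; have [b [h1 h2 h3 h4]] := H n 1%N (add1n n) (leqnn 1) hc.
  by exists b.
elim=> [|d IH] k hk h1 hc.
  by rewrite addn0 in hk; rewrite xs0 in hc; lia.
have kn : (k <= n)%N by lia.
case: (ltnP c (xs dx n k.+1)) => h.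
  have [b [? ? ? ?]] := IH k.+1 ltac:(lia) ltac:(lia) h.
  by exists b; split => //; lia.
by exists k.
Qed.

Lemma yoffE dy k : yoff dy k = yo dy k. Proof. by []. Qed.
Lemma xoffE dx n i : xoff dx n i = xs dx n i.+1. Proof. by []. Qed.

Lemma MQE (K : fieldType) n dy dx (V : rep K dy dx) (r : 'I_(dY dy n)) (c : 'I_(dX dx n)) a b :
  (yo dy a <= r)%N -> (r < yo dy a.+1)%N -> (1 <= b)%N -> (b <= n)%N ->
  (xs dx n b.+1 <= c)%N -> (c < xs dx n b)%N ->
  MQ n V r c =
    (if a == b.-1 then sget (Valpha V b) (r - yo dy b.-1) (c - xs dx n b.+1) else 0)
  + (if a == b then sget (Vbeta V b) (r - yo dy b) (c - xs dx n b.+1) else 0).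
Proof.
move=> ha1 ha2 hb1 hb2 hc1 hc2.
rewrite /MQ summxE (bigD1_seq b) /=; first last.
- exact: iota_uniq.
- by rewrite mem_index_iota; lia.
rewrite big1_seq ?addr0 => [|i /andP [ne]]; last first.
  rewrite mem_index_iota => /andP [hi1 hi2].
  rewrite mxE !embedE !yoffE !xoffE.
  have exi : xs dx n i = (dx i + xs dx n i.+1)%N by apply: xsS; lia.
  case: (ltngtP i b) => hib; last by move: ne; rewrite hib eqxx.
    have : (xs dx n b <= xs dx n i.+1)%N by apply: xs_anti.
    move=> hh; have -> : (xs dx n i.+1 <= c)%N = false by apply/negP; lia.
    by rewrite !andbF addr0.
  have : (xs dx n i <= xs dx n b.+1)%N by apply: xs_anti.
  move=> hh.
  have o1 : sget (Valpha V i) (r - yo dy i.-1) (c - xs dx n i.+1) = 0.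
    by apply: sget_oob; rewrite negb_and; apply/orP; right; lia.
  have o2 : sget (Vbeta V i) (r - yo dy i) (c - xs dx n i.+1) = 0.
    by apply: sget_oob; rewrite negb_and; apply/orP; right; lia.
  by rewrite o1 o2 !if_same addr0.
rewrite mxE !embedE !yoffE !xoffE hc1 !andbT.
have eb : b = (b.-1).+1 by lia.
congr (_ + _).
  case: (a =P b.-1) => [e|ne].
    by have -> : (yo dy b.-1 <= r)%N by rewrite -e.
  case: ifP => // h; apply: sget_oob; rewrite negb_and; apply/orP; left.
  have := yo_lt h ha2 => hba.
  have : (yo dy b <= yo dy a)%N by apply: yo_mono; lia.
  rewrite {1}eb yoS; lia.
case: (a =P b) => [e|ne].
  by have -> : (yo dy b <= r)%N by rewrite -e.
case: ifP => // h; apply: sget_oob; rewrite negb_and; apply/orP; left.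
have := yo_lt h ha2 => hba.
have : (yo dy b.+1 <= yo dy a)%N by apply: yo_mono; lia.
rewrite yoS; lia.
Qed.

Definition Good (K : fieldType) n dy dx (S : 'M[K]_(dY dy n, dX dx n)) : Prop :=
  forall (r : 'I_(dY dy n)) (c : 'I_(dX dx n)) a b,
    (yo dy a <= r)%N -> (r < yo dy a.+1)%N ->
    (xs dx n b.+1 <= c)%N -> (c < xs dx n b)%N -> b.-1 != a -> b != a -> S r c = 0.

Lemma b_range n dx b (c : 'I_(dX dx n)) :
  (xs dx n b.+1 <= c)%N -> (c < xs dx n b)%N -> (1 <= b)%N /\ (b <= n)%N.
Proof.
move=> h1 h2; split.
  have := xs_lt h1 (ltn_ord c : (c < xs dx n 1)%N); lia.
have h0 : (xs dx n n.+1 <= c)%N by rewrite xs0.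
have := xs_lt h0 h2; lia.
Qed.

Lemma image_good (K : fieldType) n dy dx (V : rep K dy dx) : Good (MQ n V).
Proof.
move=> r c a b ha1 ha2 hc1 hc2 n1 n2.
have [hb1 hb2] := b_range hc1 hc2.
rewrite (MQE V ha1 ha2 hb1 hb2 hc1 hc2).
by rewrite eq_sym (negPf n1) eq_sym (negPf n2) addr0.
Qed.

Lemma good_image (K : fieldType) n dy dx (S : 'M[K]_(dY dy n, dX dx n)) :
  Good S -> exists V : rep K dy dx, S = MQ n V.
Proof.
move=> G.
exists (@Rep K dy dx
  (fun i => \matrix_(p < dy i.-1, q < dx i) sget S (yo dy i.-1 + p) (xs dx n i.+1 + q))
  (fun i => \matrix_(p < dy i, q < dx i) sget S (yo dy i + p) (xs dx n i.+1 + q))).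
apply/matrixP => r c.
have [a [_ ha1 ha2]] := yblock (ltn_ord r : (r < yo dy n.+1)%N).
have [b [hb1 hb2 hc1 hc2]] := xblock (ltn_ord c : (c < xs dx n 1)%N).
rewrite (MQE _ ha1 ha2 hb1 hb2 hc1 hc2) /=.
have exb : xs dx n b = (dx b + xs dx n b.+1)%N by apply: xsS.
have hq : (c - xs dx n b.+1 < dx b)%N by lia.
have ha2' := ha2; rewrite yoS in ha2'.
case: (a =P b.-1) => [ea|na]; case: (a =P b) => [eb|nb].
- lia.
- have hp : (r - yo dy b.-1 < dy b.-1)%N by rewrite -ea; lia.
  have hy : (yo dy b.-1 <= r)%N by rewrite -ea.
  rewrite /= addr0 (sget_in _ hp hq) mxE /= !subnKC //.
  by rewrite sgetE.
- have hp : (r - yo dy b < dy b)%N by rewrite -eb; lia.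
  have hy : (yo dy b <= r)%N by rewrite -eb.
  rewrite /= add0r (sget_in _ hp hq) mxE /= !subnKC //.
  by rewrite sgetE.
- rewrite /= addr0; apply: (G r c a b) => //; apply/eqP => e.
    exact: na (esym e).
  exact: nb (esym e).
Qed.

Lemma good_iff (K : fieldType) n dy dx (S : 'M[K]_(dY dy n, dX dx n)) :
  Good S <->
  ((forall i j : nat, (i + 2 <= j)%N -> (j <= n)%N ->
     forall (r : 'I_(dY dy n)) (c : 'I_(dX dx n)),
       (r < yo dy i.+1)%N -> (c < xs dx n j)%N -> S r c = 0) /\
   (forall i j : nat, (2 <= i)%N -> (i <= n)%N -> (i.-1 <= j)%N -> (j <= n.-1)%N ->
     forall (r : 'I_(dY dy n)) (c : 'I_(dX dx n)),
       (yo dy j.+1 <= r)%N -> (xs dx n i <= c)%N -> S r c = 0)).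
Proof.
split.
  move=> G; split.
    move=> i j hij hjn r c hr hc.
    have [a [_ ha1 ha2]] := yblock (ltn_ord r : (r < yo dy n.+1)%N).
    have [b [hb1 hb2 hc1 hc2]] := xblock (ltn_ord c : (c < xs dx n 1)%N).
    have := yo_lt ha1 hr; have := xs_lt hc1 hc => h1 h2.
    apply: (G r c a b) => //; apply/eqP; lia.
  move=> i j hi1 hi2 hj1 hj2 r c hr hc.
  have [a [_ ha1 ha2]] := yblock (ltn_ord r : (r < yo dy n.+1)%N).
  have [b [hb1 hb2 hc1 hc2]] := xblock (ltn_ord c : (c < xs dx n 1)%N).
  have := yo_lt hr ha2; have := xs_lt hc hc2 => h1 h2.
  apply: (G r c a b) => //; apply/eqP; lia.
move=> [NW SE] r c a b ha1 ha2 hc1 hc2 n1 n2.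
have [hb1 hb2] := b_range hc1 hc2.
have han : (a < n.+1)%N by apply: (yo_lt ha1 (ltn_ord r)).
move/eqP: n1 => n1; move/eqP: n2 => n2.
case: (ltnP a b) => hab.
  apply: (NW a b) => //; lia.
apply: (SE b.+1 a.-1) => //; try lia.
by have -> : a.-1.+1 = a by lia.
Qed.

Unset Implicit Arguments.

Theorem lemmaA2 (K : fieldType) (n : nat) (dy dx : nat -> nat)
  (Z : 'M[K]_(dY dy n + dX dx n, dX dx n + dY dy n)) :
  in_Ycirc Z ->
  ((exists V : rep K dy dx, Z = zeta n V) <->
   ((forall i j : nat, (i + 2 <= j)%N -> (j <= n)%N -> rank_yx Z i j = 0%N) /\
    (forall i j : nat, (2 <= i)%N -> (i <= n)%N -> (i.-1 <= j)%N -> (j <= n.-1)%N ->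
       rank_xy Z i j = (\sum_(i <= k < n.+1) dx k + \sum_(k < j.+1) dy k)%N))).
Proof.
move=> [S ->].
have E1 : (exists V : rep K dy dx, block_mx S 1%:M 1%:M 0 = zeta n V) <-> Good S.
  split.
    by move=> [V /eq_block_mx [-> _ _ _]]; apply: image_good.
  by move=> /good_image [V ->]; exists V.
have E2 : forall i j : nat, (i + 2 <= j)%N -> (j <= n)%N ->
   rank_yx (block_mx S 1%:M 1%:M 0) i j = 0%N <->
   (forall (r : 'I_(dY dy n)) (c : 'I_(dX dx n)),
       (r < yo dy i.+1)%N -> (c < xs dx n j)%N -> S r c = 0).
  move=> i j h1 h2; apply: rank_nw0.
    by apply: yo_mono; lia.
  by apply: xs_anti; lia.
have E3 : forall i j : nat, (2 <= i)%N -> (i <= n)%N -> (i.-1 <= j)%N -> (j <= n.-1)%N ->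
   rank_xy (block_mx S 1%:M 1%:M 0) i j = (\sum_(i <= k < n.+1) dx k + \sum_(k < j.+1) dy k)%N <->
   (forall (r : 'I_(dY dy n)) (c : 'I_(dX dx n)),
       (yo dy j.+1 <= r)%N -> (xs dx n i <= c)%N -> S r c = 0).
  move=> i j h1 h2 h3 h4; apply: rank_se.
    by apply: yo_mono; lia.
  by apply: xs_anti; lia.
rewrite E1 good_iff; split.
  move=> [NW SE]; split.
    by move=> i j h1 h2; apply/(E2 i j h1 h2); apply: NW.
  by move=> i j h1 h2 h3 h4; apply/(E3 i j h1 h2 h3 h4); apply: SE.
move=> [NW SE]; split.
  by move=> i j h1 h2; apply/(E2 i j h1 h2); apply: NW.
by move=> i j h1 h2 h3 h4; apply/(E3 i j h1 h2 h3 h4); apply: SE.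
Qed.
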